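(* Let $M\in\mathbb C\setminus\{0\}$ and $y\in\mathbb C$, and set $\rho(a)=\begin{bmatrix} M&1\\0&M^{-1}\end{bmatrix}$, $\rho(b)=\begin{bmatrix} M&0\\2-y&M^{-1}\end{bmatrix}$, extended multiplicatively to words in $a^{\pm1},b^{\pm1}$. Let $I$ be the $2\times2$ identity matrix. (1) If $m\ge1$ and $w=(ba^{-1})^m(b^{-1}a)^m$, then $$\rho(w)=I-S_m(y)S_{m-1}(y)\begin{bmatrix} y-2& M-M^{-1}\\ (M-M^{-1})(2-y) & 2-y\end{bmatrix}+S_{m-1}^2(y)\begin{bmatrix} (y-2)(y-M^2) & -(M^{-1}y-M-M^{-1})\\ (y-2)(M^{-1}y-M-M^{-1}) & M^{-2}(2-y)\end{bmatrix}.$$ (2) If $m\ge0$ and $w=(ba^{-1})^m\,ba\,(b^{-1}a)^m$, then $$\rho(w)=I-S_m(y)S_{m-1}(y)\begin{bmatrix} 2M^2-y & M+M^{-1}\\ (M+M^{-1})(2-y) & 2M^{-2}-y\end{bmatrix}+S_m^2(y)\begin{bmatrix} M^2-1 & M\\ M(2-y) & -y+1+M^{-2}\end{bmatrix}+S_{m-1}^2(y)\begin{bmatrix} -y+1+M^2 & M^{-1}\\ M^{-1}(2-y) & M^{-2}-1\end{bmatrix}.$$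
   Context: $S_l(v)$, $l\in\mathbb Z$, are the Chebyshev polynomials of the second kind: $S_0(v)=1$, $S_1(v)=v$, and $S_l(v)=vS_{l-1}(v)-S_{l-2}(v)$ for all integers $l$ (so e.g. $S_{-1}=0$). *)

(* Defs.v *)
From mathcomp Require Import all_boot all_algebra.
From mathcomp Require Import complex reals.
Set Implicit Arguments. Unset Strict Implicit. Unset Printing Implicit Defensive.
Import GRing.Theory.
Local Open Scope ring_scope.

Fixpoint chebS_nat {F : ringType} (n : nat) (v : F) : F :=
  match n with
  | 0%N => 1
  | 1%N => v
  | (n'.+1 as k).+1 => v * chebS_nat k v - chebS_nat n' v
  end.

(* Extension to all integers l via the same recursion:
   S_{-1} = 0 and S_{-(n+2)} = - S_n. *)
Definition chebS {F : ringType} (l : int) (v : F) : F :=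
  match l with
  | Posz n => chebS_nat n v
  | Negz 0 => 0
  | Negz n'.+1 => - chebS_nat n' v
  end.

Definition mx2 {F : ringType} (a b c d : F) : 'M[F]_2 :=
  \matrix_(i < 2, j < 2)
    if i == 0 then (if j == 0 then a else b) else (if j == 0 then c else d).

Inductive letter := La | LaI | Lb | LbI.

Section Rho.
Variable R : realType.
Local Notation C := (R[i]).

Definition rho_a (M : C) : 'M[C]_2 := mx2 M 1 0 M^-1.
Definition rho_b (M y : C) : 'M[C]_2 := mx2 M 0 (2 - y) M^-1.

Definition rho_letter (M y : C) (x : letter) : 'M[C]_2 :=
  match x with
  | La => rho_a M
  | LaI => invmx (rho_a M)
  | Lb => rho_b M y
  | LbI => invmx (rho_b M y)
  end.

Definition rho (M y : C) (w : seq letter) : 'M[C]_2 :=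
  \prod_(x <- w) rho_letter M y x.
End Rho.

Definition wpow (w : seq letter) (m : nat) : seq letter := flatten (nseq m w).

Definition word1 (m : nat) : seq letter := wpow [:: Lb; LaI] m ++ wpow [:: LbI; La] m.
Definition word2 (m : nat) : seq letter :=
  wpow [:: Lb; LaI] m ++ [:: Lb; La] ++ wpow [:: LbI; La] m.

(* Main.v *)
Require Import Defs.
From mathcomp Require Import all_boot all_algebra.
From mathcomp Require Import complex reals.
From mathcomp Require Import ring.
Import GRing.Theory.
Local Open Scope ring_scope.

Section S.
Variable F : comUnitRingType.

Lemma mx2E (A : 'M[F]_2) : A = mx2 (A 0 0) (A 0 1) (A 1 0) (A 1 1).
Proof. by apply/matrixP=> i j; rewrite !mxE; case: i j => [[|[|i]] Hi] [[|[|j]] Hj] //=; congr (A _ _); apply: val_inj. Qed.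

Lemma mx2_mul a b c d a' b' c' d' :
  mx2 a b c d *m mx2 a' b' c' d' = mx2 (a*a' + b*c') (a*b'+b*d') (c*a'+d*c') (c*b'+d*d') :> 'M[F]_2.
Proof. by apply/matrixP=> i j; rewrite !mxE !big_ord_recl big_ord0 !mxE; case: i j => [[|[|i]] Hi] [[|[|j]] Hj] //=; rewrite addr0. Qed.

Lemma mx2_add a b c d a' b' c' d' :
  mx2 a b c d + mx2 a' b' c' d' = mx2 (a+a') (b+b') (c+c') (d+d') :> 'M[F]_2.
Proof. by apply/matrixP=> i j; rewrite !mxE; case: i j => [[|[|i]] Hi] [[|[|j]] Hj]. Qed.

Lemma mx2_opp a b c d : - mx2 a b c d = mx2 (-a) (-b) (-c) (-d) :> 'M[F]_2.
Proof. by apply/matrixP=> i j; rewrite !mxE; case: i j => [[|[|i]] Hi] [[|[|j]] Hj]. Qed.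

Lemma mx2_scale k a b c d : k *: mx2 a b c d = mx2 (k*a) (k*b) (k*c) (k*d) :> 'M[F]_2.
Proof. by apply/matrixP=> i j; rewrite !mxE; case: i j => [[|[|i]] Hi] [[|[|j]] Hj]. Qed.

Lemma mx2_1 : (1 : 'M[F]_2) = mx2 1 0 0 1.
Proof. by apply/matrixP=> i j; rewrite !mxE; case: i j => [[|[|i]] Hi] [[|[|j]] Hj]. Qed.

Lemma mx2_inv (A B : 'M[F]_2) : B *m A = 1 -> A \in unitmx -> invmx A = B.
Proof. move=> h hu. by rewrite -[RHS]mulmx1 -(mulmxV hu) mulmxA h mul1mx. Qed.

End S.

Section Main.
Variable R : realType.
Local Notation C := (R[i]).
Variables (M y : C).
Hypothesis hM : M != 0.

Local Notation cn n := (chebS (n%:Z) y).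
Local Notation cp n := (chebS (n%:Z - 1) y).

Lemma cp0 : cp 0 = 0. Proof. by []. Qed.
Lemma cpS n : cp n.+1 = cn n.
Proof. by have -> : (n.+1%:Z - 1 = n%:Z)%R by rewrite -addn1 PoszD addrK. Qed.
Lemma cnS n : cn n.+1 = y * cn n - cp n.
Proof. case: n => [|n]; first by rewrite cp0 /= mulr1 subr0. by rewrite cpS. Qed.

Lemma cheb_rel n : cn n ^+ 2 - y * cn n * cp n + cp n ^+ 2 = 1.
Proof.
elim: n => [|n IH]; first by rewrite cp0 /= expr1n mulr0 expr0n /= subr0 addr0.
rewrite cnS cpS -IH; ring.
Qed.

Lemma mx_pow (a b c d : C) :
  mx2 a b c d * mx2 a b c d = y *: mx2 a b c d - 1 ->
  forall n, mx2 a b c d ^+ n = cp n *: mx2 a b c d - (y * cp n - cn n) *: 1.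
Proof.
move=> h; elim=> [|n IH].
  by rewrite expr0 cp0 /= mulr0 sub0r scale0r sub0r scaleNr opprK scale1r.
rewrite exprSr IH mulrBl -!scalerAl h mul1r cpS cnS.
rewrite mx2_1 !(mx2_scale, mx2_opp, mx2_add).
congr mx2; ring.
Qed.

Lemma rho_cat s t : rho M y (s ++ t) = rho M y s * rho M y t.
Proof. by rewrite /rho big_cat. Qed.

Lemma rho_wpow w m : rho M y (wpow w m) = rho M y w ^+ m.
Proof.
elim: m => [|m IH]; first by rewrite /rho /wpow /= big_nil expr0.
by rewrite /wpow /= rho_cat -/(wpow w m) IH exprS.
Qed.

Lemma rho2 x z : rho M y [:: x; z] = rho_letter M y x * rho_letter M y z.
Proof. by rewrite /rho !big_cons big_nil mulr1. Qed.

Lemma invA : invmx (rho_a M) = mx2 M^-1 (-1) 0 M.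
Proof.
have h1 : mx2 M^-1 (-1) 0 M *m rho_a M = 1.
  rewrite /rho_a mx2_mul mx2_1; by congr mx2; field; rewrite ?hM.
have h2 : rho_a M *m mx2 M^-1 (-1) 0 M = 1.
  rewrite /rho_a mx2_mul mx2_1; by congr mx2; field; rewrite ?hM.
apply: mx2_inv => //; by case: (mulmx1_unit h2).
Qed.

Lemma invB : invmx (rho_b M y) = mx2 M^-1 0 (y - 2) M.
Proof.
have h1 : mx2 M^-1 0 (y - 2) M *m rho_b M y = 1.
  rewrite /rho_b mx2_mul mx2_1; by congr mx2; field; rewrite ?hM.
have h2 : rho_b M y *m mx2 M^-1 0 (y - 2) M = 1.
  rewrite /rho_b mx2_mul mx2_1; by congr mx2; field; rewrite ?hM.
apply: mx2_inv => //; by case: (mulmx1_unit h2).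
Qed.


Lemma mx2_mulr (a b c d a' b' c' d' : C) :
  mx2 a b c d * mx2 a' b' c' d' = mx2 (a*a' + b*c') (a*b'+b*d') (c*a'+d*c') (c*b'+d*d').
Proof. exact: mx2_mul. Qed.

Lemma oneE m : (1 : 'M[C]_2) = (cn m ^+ 2 - y * cn m * cp m + cp m ^+ 2) *: 1.
Proof. by rewrite cheb_rel scale1r. Qed.

Lemma part1 m : rho M y (word1 m) =
       1 - (chebS m y * chebS (m%:Z - 1) y) *:
             mx2 (y - 2) (M - M^-1) ((M - M^-1) * (2 - y)) (2 - y)
         + (chebS (m%:Z - 1) y) ^+ 2 *:
             mx2 ((y - 2) * (y - M ^+ 2)) (- (M^-1 * y - M - M^-1))
                 ((y - 2) * (M^-1 * y - M - M^-1)) (M ^- 2 * (2 - y)).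
Proof.
rewrite [in RHS](oneE m).
rewrite /word1 rho_cat !rho_wpow !rho2 /= invA invB /rho_a /rho_b !mx2_mulr !mx_pow.
all: rewrite ?mx2_1 !(mx2_mulr, mx2_scale, mx2_opp, mx2_add).
1: rewrite -/(cn m); move: (cn m) (cp m) => a b.
all: by congr mx2; field; rewrite ?hM.
Qed.


Lemma part2 m : rho M y (word2 m) =
       1 - (chebS m y * chebS (m%:Z - 1) y) *:
             mx2 (2 * M ^+ 2 - y) (M + M^-1) ((M + M^-1) * (2 - y)) (2 * M ^- 2 - y)
         + (chebS m y) ^+ 2 *:
             mx2 (M ^+ 2 - 1) M (M * (2 - y)) (- y + 1 + M ^- 2)
         + (chebS (m%:Z - 1) y) ^+ 2 *:
             mx2 (- y + 1 + M ^+ 2) M^-1 (M^-1 * (2 - y)) (M ^- 2 - 1).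
Proof.
rewrite [in RHS](oneE m).
rewrite /word2 !rho_cat !rho_wpow !rho2 /= invA invB /rho_a /rho_b !mx2_mulr !mx_pow.
all: rewrite ?mx2_1 !(mx2_mulr, mx2_scale, mx2_opp, mx2_add).
1: rewrite -/(cn m); move: (cn m) (cp m) => a b.
all: by congr mx2; field; rewrite ?hM.
Qed.

End Main.

Theorem proposition3p3 (R : realType) (M y : R[i]) (hM : M != 0) :
  (forall m : nat, (1 <= m)%N ->
     rho M y (word1 m) =
       1 - (chebS m y * chebS (m%:Z - 1) y) *:
             mx2 (y - 2) (M - M^-1) ((M - M^-1) * (2 - y)) (2 - y)
         + (chebS (m%:Z - 1) y) ^+ 2 *:
             mx2 ((y - 2) * (y - M ^+ 2)) (- (M^-1 * y - M - M^-1))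
                 ((y - 2) * (M^-1 * y - M - M^-1)) (M ^- 2 * (2 - y)))
  /\
  (forall m : nat,
     rho M y (word2 m) =
       1 - (chebS m y * chebS (m%:Z - 1) y) *:
             mx2 (2 * M ^+ 2 - y) (M + M^-1) ((M + M^-1) * (2 - y)) (2 * M ^- 2 - y)
         + (chebS m y) ^+ 2 *:
             mx2 (M ^+ 2 - 1) M (M * (2 - y)) (- y + 1 + M ^- 2)
         + (chebS (m%:Z - 1) y) ^+ 2 *:
             mx2 (- y + 1 + M ^+ 2) M^-1 (M^-1 * (2 - y)) (M ^- 2 - 1)).
Proof.
split=> [m _|m]; [exact: part1 | exact: part2].
Qed.
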